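(* Let $f$ be a linear Anosov diffeomorphism of $\mathbb{T}^2$ induced by an integer matrix $L$ with $\det L=-1$ (orientation-reversing). Then for every linear involution $R$ of $\mathbb{T}^2$ (induced by an integer matrix $A$ with $\det A=\pm1$ and $R\circ R=\mathrm{Id}$), $f$ is not $R$-reversible, i.e. $R\circ f\neq f^{-1}\circ R$.
   Context: $\mathbb{T}^2=\mathbb{R}^2/\mathbb{Z}^2$. A diffeomorphism of $\mathbb{T}^2$ induced by an integer matrix $M$ with $\det M=\pm1$ is the map $\pi(v)\mapsto\pi(Mv)$, $\pi$ the projection. A linear Anosov diffeomorphism is one induced by such a matrix with no eigenvalue of modulus one. $f$ is $R$-reversible if $R\circ f=f^{-1}\circ R$. *)

(* Defs.v *)
From HB Require Import structures.
From mathcomp Require Import all_boot all_order all_algebra all_field.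
From mathcomp Require Import reals Rstruct.
Set Implicit Arguments. Unset Strict Implicit. Unset Printing Implicit Defensive.
Import Order.TTheory GRing.Theory Num.Theory.
Local Open Scope ring_scope.

Definition RR : realType := Rdefinitions.R.

(* Points of T^2 = R^2/Z^2, represented by their unique representative in [0,1)^2. *)
Definition in_unit_square (v : 'cV[RR]_2) : bool :=
  [forall i, (0 <= v i 0) && (v i 0 < 1)].
Definition torus := {v : 'cV[RR]_2 | in_unit_square v}.

Definition frac_vec (v : 'cV[RR]_2) : 'cV[RR]_2 :=
  \col_i (v i 0 - (Num.floor (v i 0))%:~R).

Lemma frac_vec_in (v : 'cV[RR]_2) : in_unit_square (frac_vec v).
Proof.
rewrite /in_unit_square; apply/forallP => i; rewrite !mxE.
have /andP[h1 h2] := real_floor_itv (num_real (v i 0)).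
rewrite intrD in h2.
apply/andP; split; first by rewrite subr_ge0.
by rewrite ltrBlDr addrC.
Qed.

Definition pi (v : 'cV[RR]_2) : torus := exist _ (frac_vec v) (frac_vec_in v).

Definition induced (M : 'M[int]_2) : torus -> torus :=
  fun p => pi (map_mx intr M *m val p).

Definition unimodular (M : 'M[int]_2) : Prop := \det M = 1 \/ \det M = -1.

Definition linear_anosov_matrix (L : 'M[int]_2) : Prop :=
  unimodular L /\
  forall lam : algC, eigenvalue (map_mx intr L) lam -> `|lam| != 1.

(* Main.v *)
Require Import Defs.
From HB Require Import structures.
From mathcomp Require Import all_boot all_order all_algebra all_field.
From mathcomp Require Import reals Rstruct.
From mathcomp Require Import zify ring lra.
Import Order.TTheory GRing.Theory Num.Theory.
Local Open Scope ring_scope.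

Lemma frac_shift (v : 'cV[RR]_2) (z : 'cV[int]_2) :
  frac_vec (v - map_mx intr z) = frac_vec v.
Proof.
apply/matrixP => i j; rewrite (ord1 j) !mxE.
rewrite floorDrz ?rpredN ?intr_int // -rmorphN /= intrKfloor rmorphD /=.
rewrite rmorphN /=. by ring.
Qed.

Lemma pi_eq u v : frac_vec u = frac_vec v -> Defs.pi u = Defs.pi v.
Proof. by move=> h; apply/eqtype.val_inj => /=. Qed.

Lemma pi_eqE u v : Defs.pi u = Defs.pi v -> frac_vec u = frac_vec v.
Proof. by move/(congr1 val). Qed.

Lemma induced_pi M v : induced M (Defs.pi v) = Defs.pi (map_mx intr M *m v).
Proof.
rewrite /induced /=.
have -> : frac_vec v = v - map_mx intr (\col_i Num.floor (v i 0)).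
  by apply/matrixP => i j; rewrite (ord1 j) !mxE.
rewrite mulmxBr -map_mxM; apply: pi_eq; exact: frac_shift.
Qed.

Lemma pi_val p : Defs.pi (val p) = p.
Proof.
apply/eqtype.val_inj => /=; case: p => v /= /forallP hv.
apply/matrixP => i j; rewrite (ord1 j) !mxE.
have /andP[h0 h1] := hv i.
suff -> : Num.floor (v i 0) = 0 by rewrite subr0.
by apply: floor_def; rewrite h0 /= add0r.
Qed.

Lemma inducedM M N p : induced M (induced N p) = induced (M * N) p.
Proof. by rewrite {2}/induced induced_pi /induced mulmxA -map_mxM. Qed.

Lemma induced1 p : induced 1 p = p.
Proof. by rewrite /induced map_mx1 mul1mx pi_val. Qed.

Lemma frac_coef (m n : int) (t : Rdefinitions.R) :
  t = ((m - n) * (m - n) + 1)%:~R^-1 ->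
  m%:~R * t - (Num.floor (m%:~R * t))%:~R = n%:~R * t - (Num.floor (n%:~R * t))%:~R ->
  m = n.
Proof.
move=> -> h.
set D := ((m - n) * (m - n) + 1).
have hD : (D%:~R : Rdefinitions.R) != 0 by rewrite intr_eq0 gt_eqF // /D ltr_wpDl ?ltr01 // -expr2 sqr_ge0.
set a := Num.floor _ in h; set b := Num.floor _ in h.
have e1 : (m - n)%:~R * (D%:~R)^-1 = (a - b)%:~R :> Rdefinitions.R.
  rewrite !rmorphB /= mulrBl; move: h; set x := _ * _; set y := _ * _; lra.
have : (m - n)%:~R = ((a - b) * D)%:~R :> Rdefinitions.R.
  by rewrite rmorphM /= -e1 -mulrA mulVf // mulr1.
move/intr_inj; rewrite /D => e0; apply/eqP; rewrite -subr_eq0; apply/eqP.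
move: e0; set k := a - b; set d := m - n; clearbody k d => e.
have [k0|k0] := eqVneq k 0; first by move: e; rewrite k0 mul0r.
have hk : 1 <= k * k by nia.
have e2 : d * d = k * k * (((d * d) + 1) * ((d * d) + 1)) by rewrite {1 2}e; ring.
nia.
Qed.

Lemma induced_inj M N : (forall p, induced M p = induced N p) -> M = N.
Proof.
move=> h; apply/matrixP => i j.
have := h (Defs.pi (((M i j - N i j) * (M i j - N i j) + 1)%:~R^-1 *: delta_mx j 0)).
rewrite !induced_pi => /pi_eqE /matrixP /(_ i 0).
rewrite -!scalemxAr -!colE !mxE => hh.
move: hh; rewrite !(mulrC _ (_%:~R)); exact: frac_coef.
Qed.
Lemma det2 (R : comNzRingType) (B : 'M[R]_2) : \det B = B 0 0 * B 1 1 - B 0 1 * B 1 0.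
Proof.
rewrite (expand_det_row _ 0) !big_ord_recl big_ord0 /cofactor !det_mx11 !mxE /=.
set g := fun i j : nat => B (inord i) (inord j).
have hg : forall x y, B x y = g x y by move=> x y; rewrite /g !inord_val.
rewrite !hg /bump /= expr0 expr1. ring.
Qed.

Lemma mx2P (R : nzRingType) (A B : 'M[R]_2) : A 0 0 = B 0 0 -> A 0 1 = B 0 1 -> A 1 0 = B 1 0 -> A 1 1 = B 1 1 -> A = B.
Proof.
move=> h00 h01 h10 h11; apply/matrixP => i j.
have E : forall k : 'I_2, k = 0 \/ k = 1.
  by case=> [[|[|//]]] p; [left|right]; apply/val_inj.
by case: (E i) => ->; case: (E j) => ->.
Qed.

Lemma mulE2 (R : nzRingType) (A B : 'M[R]_2) i j : (A * B) i j = A i 0 * B 0 j + A i 1 * B 1 j.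
Proof.
rewrite !mxE !big_ord_recl big_ord0 addr0.
by rewrite (_ : lift ord0 (ord0 : 'I_1) = 1 :> 'I_2) //; apply/val_inj.
Qed.

Lemma oneE2 (R : nzRingType) : ((1 : 'M[R]_2) 0 0 = 1) * ((1 : 'M[R]_2) 1 1 = 1) * ((1 : 'M[R]_2) 0 1 = 0) * ((1 : 'M[R]_2) 1 0 = 0).
Proof. by rewrite !mxE. Qed.
Lemma oppE2 (R : nzRingType) (A : 'M[R]_2) i j : (- A) i j = - A i j.
Proof. by rewrite !mxE. Qed.

Lemma inv_det1 (B : 'M[int]_2) : B * B = 1 -> \det B = 1 -> B = 1 \/ B = -1.
Proof.
move=> hB; rewrite det2 => hd.
have e := fun i j => congr1 (fun M : 'M[int]_2 => M i j) hB.
move: (e 0 0) (e 0 1) (e 1 0) (e 1 1); rewrite /= !mulE2 !oneE2.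
move: hd; set a := B 0 0; set b := B 0 1; set c := B 1 0; set d := B 1 1 => hd e00 e01 e10 e11.
have h2 : a * (a + d) = 2 by rewrite mulrDr; lia.
have hs : a + d != 0 by apply/eqP => h0; move: h2; rewrite h0 mulr0.
have hb : b = 0.
  by apply/eqP; move: e01; rewrite (mulrC a) -mulrDr => /eqP; rewrite mulf_eq0 (negbTE hs) orbF.
have hc : c = 0.
  by apply/eqP; move: e10; rewrite (mulrC d) -mulrDr => /eqP; rewrite mulf_eq0 (negbTE hs) orbF.
move: hd; rewrite hb mul0r subr0 => hd.
have [ha|ha] : a = 1 \/ a = -1 by nia.
- left; apply: mx2P; rewrite !oneE2 -/a -/b -/c -/d; lia.
- right; apply: mx2P; rewrite !oppE2 !oneE2 -/a -/b -/c -/d; lia.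
Qed.

Lemma eig1 (L : 'M[int]_2) : L * L = 1 -> \det L = -1 ->
  eigenvalue (map_mx intr L : 'M[algC]_2) 1.
Proof.
move=> hL; rewrite det2 => hd.
have e := fun i j => congr1 (fun M : 'M[int]_2 => M i j) hL.
move: (e 0 0) (e 1 1); rewrite /= !mulE2 !oneE2.
move: hd; set p := L 0 0; set q := L 0 1; set r := L 1 0; set s := L 1 1 => hd e00 e11.
have hps : (p + s) * (p + s) = 0.
  have -> : (p + s) * (p + s) = (p * p + q * r) + (r * q + s * s) + 2 * (p * s - q * r) by ring.
  by rewrite e00 e11 hd.
have hs : p + s = 0 by apply/eqP; move/eqP: hps; rewrite mulf_eq0 orbb.
have h0 : (p - 1) * (s - 1) - q * r = 0.
  have -> : (p - 1) * (s - 1) - q * r = (p * s - q * r) - (p + s) + 1 by ring.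
  by rewrite hd hs.
have : \det (map_mx intr L - 1%:M : 'M[algC]_2) == 0.
  rewrite det2 !mxE /= -/p -/q -/r -/s !subr0.
  have -> : (p%:~R - 1) * (s%:~R - 1) - q%:~R * r%:~R = (((p - 1) * (s - 1) - q * r)%:~R : algC).
    by rewrite !(rmorphB, rmorphM, rmorph1).
  by rewrite h0.
case/det0P => v nz hv; apply/eigenvalueP; exists v => //.
by move/eqP: hv; rewrite mulmxBr mulmx1 subr_eq0 scale1r => /eqP.
Qed.

Theorem mainTheorem4 (L : 'M[int]_2) :
  linear_anosov_matrix L -> \det L = -1 ->
  forall A : 'M[int]_2, unimodular A ->
    induced A \o induced A = id ->
    forall finv : torus -> torus,
      cancel (induced L) finv -> cancel finv (induced L) ->
      induced A \o induced L <> finv \o induced A.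
Proof.
move=> [_ heig] hdL A hA hAA finv c1 c2 hrev.
have AA : A * A = 1.
  apply: induced_inj => p; rewrite -inducedM induced1.
  exact: (congr1 (fun f => f p) hAA).
have LAL : L * A * L = A.
  apply: induced_inj => p; rewrite -!inducedM.
  have := congr1 (fun f => f p) hrev; rewrite /= => ->.
  by rewrite c2.
have LA2 : (L * A) * (L * A) = 1 by rewrite mulrA LAL AA.
have LL : L * L = 1.
  case: hA => hdA.
  - case: (inv_det1 A AA hdA) => hA1; move: LAL; rewrite hA1.
    + by rewrite mulr1.
    + by rewrite mulrN1 mulNr => /oppr_inj.
  - have hd : \det (L * A) = 1 by rewrite detM hdL hdA mulrNN mulr1.
    case: (inv_det1 (L * A) LA2 hd) => h.
    + have -> : L = A by rewrite -[L]mulr1 -AA mulrA h mul1r.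
      exact: AA.
    + have -> : L = - A by rewrite -[L]mulr1 -AA mulrA h mulN1r.
      by rewrite mulrNN.
have := heig 1 (eig1 L LL hdL).
by rewrite normr1 eqxx.
Qed.
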